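(* Let $\lambda>0$, let $\gamma\ge0$, and let $Z_s\in\mathbb{R}^{1\times(n+m)}$ be row vectors with $\|Z_s\|_2\le1+\gamma$. Let $\Theta^*_s\in\mathbb{R}^{(n+m)\times n}$ satisfy $\sum_{s=1}^{H-1}\|\Theta^*_{s+1}-\Theta^*_s\|_F\le\mathcal{B}_H$. Let $h_0\le h$ lie in the same restart epoch of size $L$ (so $h-h_0\le L$). Then for any $h\in[H]$, \[ \Big\|\Big(\sum_{s=h_0}^{h-1}Z_s^\top Z_s+\lambda I\Big)^{-1}\Big(\sum_{s=h_0}^{h-1}Z_s^\top Z_s(\Theta^*_s-\Theta^*_h)\Big)\Big\|_F\le(1+\gamma)\sqrt{\tfrac{L(m+n)}{\lambda}}\,\mathcal{B}_H. \]
   Context: In the paper, $Z_s=[x_s^\top,u_s^\top]$ for the states and controls of a time-varying linear system $x_{s+1}=A_sx_s+B_su_s+w_s$ with $\Theta^*_s=[A_s,B_s]^\top$, the bound $\|Z_s\|_2\le1+\gamma$ holds with $\gamma$ a bound on the control norms $\|u_s\|_2$ (states having norm at most $1$), and $h_0$ is the start of the current epoch of the restarting strategy with epoch length $L$. *)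

(* Defs.v *)
From mathcomp Require Import all_boot all_order all_algebra.
From mathcomp Require Import reals.
Set Implicit Arguments. Unset Strict Implicit. Unset Printing Implicit Defensive.
Import Order.TTheory GRing.Theory Num.Theory.
Local Open Scope ring_scope.

Definition frob (R : realType) (p q : nat) (A : 'M[R]_(p, q)) : R :=
  Num.sqrt (\sum_(i < p) \sum_(j < q) (A i j) ^+ 2).

(* Main.v *)
Require Import Defs.
From mathcomp Require Import all_boot all_order all_algebra.
From mathcomp Require Import reals ring lra.
Import Order.TTheory GRing.Theory Num.Theory.
Set Implicit Arguments. Unset Strict Implicit. Unset Printing Implicit Defensive.
Local Open Scope ring_scope.

Lemma cs (R : realType) (I : Type) (r : seq I) (a b : I -> R) :
  (\sum_(i <- r) a i * b i) ^+ 2 <=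
  (\sum_(i <- r) a i ^+ 2) * (\sum_(i <- r) b i ^+ 2).
Proof.
set P := \sum_(i <- r) \sum_(j <- r) a i ^+ 2 * b j ^+ 2.
set Q := \sum_(i <- r) \sum_(j <- r) (a i * b i) * (a j * b j).
have eP : (\sum_(i <- r) a i ^+ 2) * (\sum_(i <- r) b i ^+ 2) = P.
  by rewrite mulr_suml; apply: eq_bigr => i _; rewrite mulr_sumr.
have eQ : (\sum_(i <- r) a i * b i) ^+ 2 = Q.
  by rewrite expr2 mulr_suml; apply: eq_bigr => i _; rewrite mulr_sumr.
have eP' : \sum_(i <- r) \sum_(j <- r) a j ^+ 2 * b i ^+ 2 = P.
  by rewrite /P exchange_big.
have key : \sum_(i <- r) \sum_(j <- r) (a i * b j - a j * b i) ^+ 2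
    = P + P - 2 * Q.
  rewrite -{2}eP' /P /Q mulr_sumr -!big_split /= -sumrB.
  apply: eq_bigr => i _; rewrite mulr_sumr -!big_split /= -sumrB.
  by apply: eq_bigr => j _; ring.
have : 0 <= P + P - 2 * Q.
  by rewrite -key; apply: sumr_ge0 => i _; apply: sumr_ge0 => j _; exact: sqr_ge0.
rewrite eP eQ; lra.
Qed.

Definition nrm2 (R : realType) (p q : nat) (A : 'M[R]_(p, q)) : R :=
  \sum_(i < p) \sum_(j < q) (A i j) ^+ 2.

Lemma frobE (R : realType) p q (A : 'M[R]_(p, q)) : frob A = Num.sqrt (nrm2 A).
Proof. by []. Qed.

Lemma nrm2_ge0 (R : realType) p q (A : 'M[R]_(p, q)) : 0 <= nrm2 A.
Proof. by apply: sumr_ge0 => i _; apply: sumr_ge0 => j _; exact: sqr_ge0. Qed.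

Lemma nrm2_row (R : realType) q (x : 'rV[R]_q) : nrm2 x = \sum_j x 0 j ^+ 2.
Proof. by rewrite /nrm2 big_ord1. Qed.

Lemma nrm2_tr (R : realType) p q (A : 'M[R]_(p, q)) : nrm2 A^T = nrm2 A.
Proof. by rewrite /nrm2 exchange_big; apply: eq_bigr => i _; apply: eq_bigr => j _; rewrite mxE. Qed.

Lemma nrm2_opp (R : realType) p q (A : 'M[R]_(p, q)) : nrm2 (- A) = nrm2 A.
Proof. by apply: eq_bigr => i _; apply: eq_bigr => j _; rewrite mxE sqrrN. Qed.

Lemma nrm2_sqr (R : realType) p q (A : 'M[R]_(p, q)) : frob A ^+ 2 = nrm2 A.
Proof. by rewrite frobE sqr_sqrtr // nrm2_ge0. Qed.

Lemma frob_ge0 (R : realType) p q (A : 'M[R]_(p, q)) : 0 <= frob A.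
Proof. exact: sqrtr_ge0. Qed.

Lemma frob_triangle (R : realType) p q (A B : 'M[R]_(p, q)) :
  frob (A + B) <= frob A + frob B.
Proof.
set ip := \sum_(i < p) \sum_(j < q) A i j * B i j.
have e : nrm2 (A + B) = nrm2 A + nrm2 B + 2 * ip.
  rewrite /nrm2 /ip mulr_sumr -!big_split /=; apply: eq_bigr => i _.
  rewrite mulr_sumr -!big_split /=; apply: eq_bigr => j _; rewrite mxE; ring.
have hip : ip ^+ 2 <= nrm2 A * nrm2 B.
  rewrite /ip /nrm2 !pair_bigA /=; exact: cs.
have hip2 : ip <= frob A * frob B.
  rewrite !frobE -sqrtrM ?nrm2_ge0 //.
  apply: le_trans (ler_norm ip) _; rewrite -sqrtr_sqr; exact: ler_wsqrtr.
rewrite frobE e -[X in _ <= X]ger0_norm ?addr_ge0 ?frob_ge0 //.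
rewrite -sqrtr_sqr; apply: ler_wsqrtr.
rewrite sqrrD !nrm2_sqr; lra.
Qed.

Lemma nrm2_mul_row (R : realType) p q (x : 'rV[R]_p) (D : 'M[R]_(p, q)) :
  nrm2 (x *m D) <= nrm2 x * nrm2 D.
Proof.
rewrite !nrm2_row /nrm2 exchange_big mulr_sumr; apply: ler_sum => j _.
rewrite mxE; exact: cs.
Qed.

Lemma tele (R : realType) p q (Theta : nat -> 'M[R]_(p, q)) s k :
  frob (Theta s - Theta (s + k)%N) <=
  \sum_(s <= i < s + k) frob (Theta i.+1 - Theta i).
Proof.
elim: k => [|k IH].
  rewrite addn0 subrr big_geq // frobE /nrm2 big1 ?sqrtr0 // => i _; rewrite big1 // => j _; by rewrite mxE expr0n.
rewrite addnS big_nat_recr /= ?leq_addr //.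
have -> : Theta s - Theta (s + k).+1 = (Theta s - Theta (s + k)%N) + (Theta (s + k)%N - Theta (s + k).+1).
  by rewrite addrA subrK.
apply: le_trans (frob_triangle _ _) _; apply: lerD => //.
by rewrite !frobE -nrm2_opp opprB.
Qed.

Lemma subsum (R : realType) (f : nat -> R) s h H :
  (forall k, 0 <= f k) -> (1 <= s)%N -> (s <= h)%N -> (h <= H)%N ->
  \sum_(s <= k < h) f k <= \sum_(1 <= k < H) f k.
Proof.
move=> f0 h1 h2 h3.
rewrite (@big_cat_nat _ _ _ s 1 H) ?(leq_trans h2 h3) // (@big_cat_nat _ _ _ h s H) //=.
have := @sumr_ge0 R _ (index_iota 1 s) xpredT f (fun k _ => f0 k).
have := @sumr_ge0 R _ (index_iota h H) xpredT f (fun k _ => f0 k).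
lra.
Qed.

Unset Implicit Arguments.

Theorem lemma6 (R : realType) (n m H L h0 h : nat) (lambda gamma BH : R)
  (Z : nat -> 'rV[R]_(n + m)) (Theta : nat -> 'M[R]_(n + m, n)) :
  0 < lambda -> 0 <= gamma ->
  (forall s : nat, (1 <= s <= H)%N -> frob (Z s) <= 1 + gamma) ->
  \sum_(1 <= s < H) frob (Theta s.+1 - Theta s) <= BH ->
  (1 <= h0)%N -> (h0 <= h)%N -> (h <= H)%N -> (h - h0 <= L)%N ->
  frob (invmx (\sum_(h0 <= s < h) ((Z s)^T *m Z s) + lambda%:M)
          *m (\sum_(h0 <= s < h) ((Z s)^T *m Z s *m (Theta s - Theta h))))
    <= (1 + gamma) * Num.sqrt (L%:R * (m + n)%:R / lambda) * BH.
Proof.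
move=> lam0 gam0 hZ hB h01 h0h hH hL.
set A := \sum_(h0 <= s < h) ((Z s)^T *m Z s).
set V := A + lambda%:M.
set W := invmx V.
have quad : forall y : 'rV[R]_(n + m), lambda * nrm2 y <= (y *m V *m y^T) 0 0.
  move=> y.
  rewrite /V mulmxDr mulmxDl mul_mx_scalar -scalemxAl.
  have -> : ((y *m A *m y^T) + lambda *: (y *m y^T)) 0 0
     = (y *m A *m y^T) 0 0 + lambda * (y *m y^T) 0 0 by rewrite !mxE.
  have -> : (y *m y^T) 0 0 = nrm2 y.
    by rewrite nrm2_row mxE; apply: eq_bigr => j _; rewrite mxE expr2.
  rewrite lerDr /A mulmx_sumr mulmx_suml summxE; apply: sumr_ge0 => s _.
  rewrite mulmxA -[_ *m Z s *m _]mulmxA mxE big_ord1.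
  have -> : (Z s *m y^T) = (y *m (Z s)^T)^T by rewrite trmx_mul trmxK.
  by rewrite [X in _ * X]mxE -expr2 sqr_ge0.
have nrm2_eq0 : forall q (y : 'rV[R]_q), nrm2 y = 0 -> y = 0.
  move=> q y; rewrite nrm2_row => /eqP; rewrite psumr_eq0 => [/allP hy|j _]; last exact: sqr_ge0.
  apply/rowP => j; rewrite mxE.
  by have /= := hy j (mem_index_enum _); rewrite sqrf_eq0 => /eqP.
have Vunit : V \in unitmx.
  rewrite -row_free_unit -kermx_eq0; apply/eqP/row_matrixP => i; rewrite row0.
  set y := row i (kermx V).
  have yV : y *m V = 0 by rewrite /y -row_mul mulmx_ker row0.
  have := quad y; rewrite yV mul0mx mxE => hq.
  apply: nrm2_eq0; apply/eqP; rewrite eq_le nrm2_ge0 andbT.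
  by rewrite -(pmulr_rle0 _ lam0).
have Vsym : V^T = V.
  rewrite /V /A linearD /= tr_scalar_mx raddf_sum; congr (_ + _).
  by apply: eq_bigr => s _ /=; rewrite trmx_mul trmxK.
have Wsym : W^T = W by rewrite /W trmx_inv Vsym.
have q2 : forall x : 'rV[R]_(n + m), lambda * nrm2 (x *m W) <= (x *m W *m x^T) 0 0.
  move=> x; set y := x *m W.
  have -> : x = y *m V by rewrite /y -mulmxA mulVmx ?mulmx1.
  by rewrite -/y trmx_mul Vsym mulmxA.
have trW : 0 <= \tr W.
  rewrite /mxtrace; apply: sumr_ge0 => i _.
  have -> : W i i = ((delta_mx 0 i : 'rV[R]_(n + m)) *m W *m (delta_mx 0 i : 'rV[R]_(n + m))^T) 0 0.
    by rewrite trmx_delta -rowE -colE !mxE.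
  apply: le_trans (q2 _); rewrite mulr_ge0 ?nrm2_ge0 //; exact: ltW.
have trsum : \sum_(h0 <= s < h) (Z s *m W *m (Z s)^T) 0 0 = (n + m)%:R - lambda * \tr W.
  transitivity (\sum_(h0 <= s < h) \tr ((Z s)^T *m Z s *m W)).
    apply: eq_bigr => s _; symmetry; rewrite -mulmxA mxtrace_mulC.
    by rewrite /mxtrace big_ord1.
  rewrite -raddf_sum -mulmx_suml -/A.
  have -> : A = V - lambda%:M by rewrite /V addrK.
  by rewrite mulmxBl mulmxV // mul_scalar_mx raddfB /= mxtraceZ mxtrace1.
set y := fun s => Z s *m W.
set r := fun s => Z s *m (Theta s - Theta h).
have eM : W *m \sum_(h0 <= s < h) ((Z s)^T *m Z s *m (Theta s - Theta h))
    = \sum_(h0 <= s < h) (y s)^T *m r s.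
  rewrite mulmx_sumr; apply: eq_bigr => s _.
  by rewrite /y /r trmx_mul Wsym !mulmxA.
rewrite eM.
set Sy := \sum_(h0 <= s < h) nrm2 (y s).
set Sr := \sum_(h0 <= s < h) nrm2 (r s).
have hM : nrm2 (\sum_(h0 <= s < h) (y s)^T *m r s) <= Sy * Sr.
  apply: (@le_trans _ _ (\sum_i \sum_j ((\sum_(h0 <= s < h) y s 0 i ^+ 2)
                           * (\sum_(h0 <= s < h) r s 0 j ^+ 2)))).
    apply: ler_sum => i _; apply: ler_sum => j _.
    rewrite summxE.
    have -> : \sum_(h0 <= s < h) ((y s)^T *m r s) i j
        = \sum_(h0 <= s < h) y s 0 i * r s 0 j.
      by apply: eq_bigr => s _; rewrite mxE big_ord1 mxE.
    exact: cs.
  rewrite le_eqVlt; apply/orP; left; apply/eqP.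
  rewrite (eq_bigr (fun i => (\sum_(h0 <= s < h) y s 0 i ^+ 2) * \sum_j (\sum_(h0 <= s < h) r s 0 j ^+ 2))); last first.
    by move=> i _; rewrite mulr_sumr.
  rewrite -mulr_suml /Sy /Sr; congr (_ * _); rewrite exchange_big; apply: eq_bigr => s _; by rewrite nrm2_row.
have BH0 : 0 <= BH.
  by apply: le_trans hB; apply: sumr_ge0 => k _; exact: frob_ge0.
have hy : lambda * Sy <= (n + m)%:R.
  rewrite /Sy mulr_sumr; apply: (@le_trans _ _ (\sum_(h0 <= s < h) (Z s *m W *m (Z s)^T) 0 0)).
    by apply: ler_sum => s _; exact: q2.
  rewrite trsum; have := trW; have := lam0; nra.
have hr : Sr <= L%:R * ((1 + gamma) ^+ 2 * BH ^+ 2).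
  apply: (@le_trans _ _ (\sum_(h0 <= s < h) ((1 + gamma) ^+ 2 * BH ^+ 2))).
    apply: ler_sum_nat => s /andP [hs1 hs2].
    apply: le_trans (nrm2_mul_row _ _) _.
    have hz : frob (Z s) <= 1 + gamma.
      apply: hZ; rewrite (leq_trans h01 hs1) /=; exact: leq_trans (ltnW hs2) hH.
    have hd : frob (Theta s - Theta h) <= BH.
      have := tele Theta s (h - s); rewrite subnKC ?(ltnW hs2) // => ht.
      apply: le_trans ht _; apply: le_trans hB.
      apply: subsum => //; [move=> k; exact: frob_ge0 | exact: leq_trans h01 hs1 | exact: ltnW].
    rewrite -!nrm2_sqr.
    have := frob_ge0 (Z s); have := frob_ge0 (Theta s - Theta h).
    move: hz hd; set a := frob (Z s); set b := frob (Theta s - Theta h) => hz hd ha hb.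
    apply: ler_pM; rewrite ?sqr_ge0 //; nra.
  rewrite sumr_const_nat -[_ *+ (h - h0)]mulr_natl.
  by apply: ler_wpM2r; [rewrite mulr_ge0 ?sqr_ge0 | rewrite ler_nat].
have Sy0 : 0 <= Sy by apply: sumr_ge0 => s _; exact: nrm2_ge0.
have Sr0 : 0 <= Sr by apply: sumr_ge0 => s _; exact: nrm2_ge0.
have hy' : Sy <= lambda^-1 * (n + m)%:R by rewrite ler_pdivlMl.
have hfin : nrm2 (\sum_(h0 <= s < h) (y s)^T *m r s)
    <= ((1 + gamma) * BH) ^+ 2 * (L%:R * (m + n)%:R / lambda).
  apply: le_trans hM _.
  apply: le_trans (ler_pM Sy0 Sr0 hy' hr) _.
  by rewrite (addnC m n) le_eqVlt; apply/orP; left; apply/eqP; ring.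
rewrite frobE; apply: le_trans (ler_wsqrtr hfin) _.
rewrite sqrtrM ?sqr_ge0 // sqrtr_sqr ger0_norm; last by rewrite mulr_ge0 // addr_ge0.
by rewrite mulrAC.
Qed.
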